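(* Fix an agent $k$ and coefficients $W_{i,j}\in[-1,1]$, $i,j\in[m_k]$, and suppose there are $\varepsilon',\varepsilon''\ge0$ such that $W_{i,i}\ge\max\{W_{i,j}-\varepsilon',-\varepsilon''\}$ for all $i,j\in[m_k]$. Let $(q^*_{i,j})_{i,j\in[m_k]}$ be an optimal solution of the program $(P^3)$ with these coefficients. Then for all $i,j\in[m_k]$: if $q^*_{i,j}>0$ then $W_{i,j}\ge W_{i,i}-m\varepsilon'-\sqrt2\,m\gamma$.
   Context: Agent $k$ has a finite type support $\{t_k^{(1)},\dots,t_k^{(m_k)}\}$ with probabilities $F_i>0$ summing to 1; $m=\max_{k'}m_{k'}$ (so $m\ge m_k$). With $\gamma>0$ and $\phi(\mathbf{q})=\frac12\gamma\|\mathbf{q}\|_2^2$, program $(P^3)$: maximize $\sum_i F_i(\sum_j W_{i,j}q_{i,j}-\phi(\mathbf{q}_i))$ subject to $\sum_j q_{i,j}=1$ for all $i$, $\sum_iF_iq_{i,j}=F_j$ for all $j$, $q_{i,j}\ge0$, where $\mathbf{q}_i=(q_{i,j})_j$. *)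

(* Defs.v *)
From HB Require Import structures.
From mathcomp Require Import all_boot all_order all_algebra.
From mathcomp Require Import reals.
Set Implicit Arguments. Unset Strict Implicit. Unset Printing Implicit Defensive.
Import Order.TTheory GRing.Theory Num.Theory.
Local Open Scope ring_scope.

Definition phi (R : realType) (n : nat) (gamma : R) (qi : 'I_n -> R) : R :=
  2^-1 * gamma * \sum_(j < n) (qi j) ^+ 2.

Definition P3_obj (R : realType) (n : nat) (gamma : R) (F : 'I_n -> R)
    (W q : 'I_n -> 'I_n -> R) : R :=
  \sum_(i < n) F i * (\sum_(j < n) W i j * q i j - phi gamma (q i)).

Definition P3_feasible (R : realType) (n : nat) (F : 'I_n -> R)
    (q : 'I_n -> 'I_n -> R) : Prop :=
  (forall i, \sum_(j < n) q i j = 1) /\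
  (forall j, \sum_(i < n) F i * q i j = F j) /\
  (forall i j, 0 <= q i j).

Definition P3_optimal (R : realType) (n : nat) (gamma : R) (F : 'I_n -> R)
    (W q : 'I_n -> 'I_n -> R) : Prop :=
  P3_feasible F q /\
  forall q', P3_feasible F q' -> P3_obj gamma F W q' <= P3_obj gamma F W q.

(* Main.v *)
Require Import Defs.
From HB Require Import structures.
From mathcomp Require Import all_boot all_order all_algebra.
From mathcomp Require Import reals.
From mathcomp Require Import ring lra.
Import Order.TTheory GRing.Theory Num.Theory.
Local Open Scope ring_scope.

Section Aux.
Variable R : realType.
Variable n : nat.
Implicit Types (H : 'I_n -> R).

Lemma sum_delta_l (x : 'I_n) H : \sum_(a < n) (a == x)%:R * H a = H x.
Proof.
rewrite (bigD1 x) //= eqxx mul1r big1 ?addr0 // => a /negbTE ->; by rewrite mul0r.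
Qed.

Lemma sum_delta (x : 'I_n) : \sum_(a < n) (a == x)%:R = 1 :> R.
Proof.
rewrite -[RHS](sum_delta_l x (fun _ => 1)); apply: eq_bigr => a _; by rewrite mulr1.
Qed.

Definition Dm (es : seq ('I_n * 'I_n)) (a b : 'I_n) : R :=
  \sum_(e <- es) (a == e.1)%:R * ((b == e.1)%:R - (b == e.2)%:R).

Lemma row_D es a : \sum_(b < n) Dm es a b = 0.
Proof.
rewrite /Dm exchange_big /= big1 // => e _.
by rewrite -mulr_sumr sumrB !sum_delta subrr mulr0.
Qed.

Lemma col_D es b :
  (forall c, \sum_(e <- es) (c == e.1)%:R = \sum_(e <- es) (c == e.2)%:R :> R) ->
  \sum_(a < n) Dm es a b = 0.
Proof.
move=> bal; rewrite /Dm exchange_big /=.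
rewrite (eq_bigr (fun e : 'I_n * 'I_n => (b == e.1)%:R - (b == e.2)%:R)).
  by rewrite sumrB bal subrr.
by move=> e _; rewrite sum_delta_l.
Qed.

Lemma lin_D es (G : 'I_n -> 'I_n -> R) :
  \sum_(a < n) \sum_(b < n) G a b * Dm es a b =
  \sum_(e <- es) (G e.1 e.1 - G e.1 e.2).
Proof.
rewrite /Dm.
transitivity (\sum_(e <- es) \sum_(a < n) \sum_(b < n)
   (a == e.1)%:R * (G a b * ((b == e.1)%:R - (b == e.2)%:R))).
  symmetry; rewrite exchange_big /=; apply: eq_bigr => a _.
  rewrite exchange_big /=; apply: eq_bigr => b _.
  by rewrite mulr_sumr; apply: eq_bigr => e _; ring.
apply: eq_bigr => e _.
rewrite (eq_bigr (fun a : 'I_n => (a == e.1)%:R * \sum_(b < n) G a b * ((b == e.1)%:R - (b == e.2)%:R))); last first.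
  by move=> a _; rewrite mulr_sumr.
rewrite sum_delta_l.
rewrite (eq_bigr (fun b : 'I_n => (b == e.1)%:R * G e.1 b - (b == e.2)%:R * G e.1 b)); last first.
  by move=> b _; ring.
by rewrite sumrB !sum_delta_l.
Qed.

End Aux.


Lemma obj_diff (R : realType) (n : nat) (gamma t : R) (F : 'I_n -> R)
  (W q D : 'I_n -> 'I_n -> R) :
  (forall a, F a != 0) ->
  P3_obj gamma F W (fun a b => q a b + t * D a b / F a) - P3_obj gamma F W q =
  t * (\sum_(a < n) \sum_(b < n) (W a b - gamma * q a b) * D a b)
  - t ^+ 2 * (2^-1 * gamma * \sum_(a < n) \sum_(b < n) D a b ^+ 2 / F a).
Proof.
move=> Fn0; rewrite /P3_obj /phi.
rewrite -sumrB !mulr_sumr -sumrB; apply: eq_bigr => a _.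
rewrite !mulr_sumr -!sumrB !mulr_sumr -!sumrB; apply: eq_bigr => b _.
by field.
Qed.


Lemma lim_le0 (R : realType) (t0 L Q : R) : 0 < t0 -> 0 <= Q ->
  (forall t, 0 < t <= t0 -> t * L - t ^+ 2 * Q <= 0) -> L <= 0.
Proof.
move=> t0p Qp H; rewrite leNgt; apply/negP => Lp.
set t := Num.min t0 (L / (Q + 1)).
have tp : 0 < t by rewrite lt_min t0p divr_gt0 // ltr_wpDl.
have tle : t <= t0 by rewrite ge_min lexx.
have tle2 : t <= L / (Q + 1) by rewrite ge_min lexx orbT.
have := H t; rewrite tp tle => /(_ isT) h.
have h2 : L <= t * Q.
  have : t * (L - t * Q) <= 0 by rewrite mulrBr mulrA -expr2.
  by rewrite pmulr_rle0 // subr_le0.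
have h3 : t * (Q + 1) <= L by rewrite -ler_pdivlMr // ltr_wpDl.
nra.
Qed.

Lemma fin_small (R : realType) (T : finType) (P : T -> R -> Prop) :
  (forall x, exists2 t, 0 < t & forall s, 0 < s <= t -> P x s) ->
  exists2 t, 0 < t & forall x s, 0 < s <= t -> P x s.
Proof.
move=> H.
suff: forall l : seq T, exists2 t, 0 < t & forall x, x \in l -> forall s, 0 < s <= t -> P x s.
  case/(_ (enum T)) => t tp Ht; exists t => // x s hs; apply: Ht => //; by rewrite mem_enum.
elim=> [|y l [t1 t1p IH]]; first by exists 1 => //.
have [t2 t2p H2] := H y.
exists (Num.min t1 t2); first by rewrite lt_min t1p t2p.
move=> x; rewrite inE => /orP [/eqP -> | xl] s /andP [sp sle].
  apply: H2; rewrite sp /=; apply: le_trans sle _; by rewrite ge_min lexx orbT.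
apply: IH => //; rewrite sp /=; apply: le_trans sle _; by rewrite ge_min lexx.
Qed.


Lemma D_ge0 (R : realType) n (es : seq ('I_n * 'I_n)) a b :
  ~~ has (fun e => (e.1 == a) && (e.2 == b)) es -> 0 <= @Dm R n es a b.
Proof.
move/hasPn => H; rewrite /Dm big_seq; apply: sumr_ge0 => e /H.
have [ae|ane] := eqVneq a e.1; last by rewrite mul0r.
rewrite mul1r -ae /= => /negbTE; rewrite eq_sym => ->; by rewrite subr0.
Qed.

Lemma perturb (R : realType) n (gamma : R) (F : 'I_n -> R) (W q : 'I_n -> 'I_n -> R)
  (es : seq ('I_n * 'I_n)) :
  0 <= gamma -> (forall a, 0 < F a) -> P3_optimal gamma F W q ->
  (forall c, \sum_(e <- es) (c == e.1)%:R = \sum_(e <- es) (c == e.2)%:R :> R) ->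
  (forall e, e \in es -> 0 < q e.1 e.2) ->
  \sum_(e <- es) ((W e.1 e.1 - gamma * q e.1 e.1) - (W e.1 e.2 - gamma * q e.1 e.2)) <= 0.
Proof.
move=> g0 Fp [[qrow [qcol qge0]] qopt] bal epos.
have Fn0 a : F a != 0 by rewrite gt_eqF.
set D := @Dm R n es.
have [t0 t0p Ht0] : exists2 t, 0 < t & forall (x : 'I_n * 'I_n) s, 0 < s <= t ->
     0 <= q x.1 x.2 + s * D x.1 x.2 / F x.1.
  apply: fin_small => -[a b] /=.
  have [Dge|Dlt] := leP 0 (D a b).
    exists 1 => // s /andP [sp _]; apply: addr_ge0 => //.
    by apply: divr_ge0; [apply: mulr_ge0 => //; apply: ltW | apply: ltW].
  have qp : 0 < q a b.
    case: (boolP (has (fun e => (e.1 == a) && (e.2 == b)) es)) => [/hasP [e ein /andP [/eqP e1 /eqP e2]]|hn].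
      by rewrite -e1 -e2; apply: epos.
    by move: (@D_ge0 R n es a b hn); rewrite -/D leNgt Dlt.
  exists (q a b * F a / (- D a b)).
    by rewrite divr_gt0 ?mulr_gt0 // oppr_gt0.
  move=> s /andP [sp sle].
  have Dn0 : D a b != 0 by rewrite lt_eqF.
  have e : q a b + s * D a b / F a = (q a b * F a + s * D a b) / F a by field.
  rewrite e; apply: divr_ge0; last exact: ltW (Fp a).
  have : s * (- D a b) <= q a b * F a / (- D a b) * (- D a b).
    by apply: ler_wpM2r => //; rewrite oppr_ge0 ltW.
  rewrite divfK ?oppr_eq0 //; lra.
have L0 : \sum_(a < n) \sum_(b < n) (W a b - gamma * q a b) * D a b <= 0.
  apply: (@lim_le0 R t0 _ (2^-1 * gamma * \sum_(a < n) \sum_(b < n) D a b ^+ 2 / F a)) => //.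
    apply: mulr_ge0; first by apply: mulr_ge0 => //; rewrite invr_ge0.
    apply: sumr_ge0 => a _; apply: sumr_ge0 => b _.
    by apply: divr_ge0; [apply: sqr_ge0 | apply: ltW].
  move=> t /andP [tp tle].
  rewrite -obj_diff // subr_le0; apply: qopt; split; [|split].
  - move=> a; rewrite big_split /= qrow.
    rewrite (eq_bigr (fun b => t / F a * D a b)); last by move=> b _; rewrite mulrAC.
    by rewrite -mulr_sumr /D row_D mulr0 addr0.
  - move=> b.
    rewrite (eq_bigr (fun a => F a * q a b + t * D a b)); last first.
      by move=> a _; rewrite mulrDr; congr (_ + _); field.
    by rewrite big_split /= qcol -mulr_sumr /D col_D // mulr0 addr0.
  - by move=> a b; apply: (Ht0 (a, b)); rewrite tp tle.
by move: L0; rewrite /D lin_D.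
Qed.


Lemma reach (R : realType) n (F : 'I_n -> R) (q : 'I_n -> 'I_n -> R) i j :
  P3_feasible F q -> (forall a, 0 < F a) -> 0 < q i j ->
  connect (fun a b => 0 < q a b) j i.
Proof.
move=> [qrow [qcol qge0]] Fp qij.
set e := (fun a b => 0 < q a b).
apply/negPn/negP => ni.
set S := [set a | connect e j a].
have jS : j \in S by rewrite inE connect0.
have iS : i \notin S by rewrite inE.
have zero a b : a \in S -> b \notin S -> q a b = 0.
  rewrite !inE => aS bS; apply/eqP; rewrite eq_le qge0 andbT leNgt; apply/negP => h.
  by move/negP: bS; apply; apply: connect_trans aS (connect1 _).
have E1 : \sum_(a in S) F a = \sum_(a in S) \sum_(b in S) F a * q a b.
  apply: eq_bigr => a aS; rewrite -mulr_sumr.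
  rewrite [X in _ = _ * X](eq_bigr (fun b => q a b)) //.
  rewrite -[LHS]mulr1 -(qrow a) (bigID (fun b => b \in S)) /= [X in _ + X]big1 ?addr0 //.
  by move=> b bS; apply: zero.
have E2 : \sum_(a in S) F a = \sum_(a in S) \sum_(b in S) F b * q b a
                             + \sum_(a in S) \sum_(b | b \notin S) F b * q b a.
  rewrite -big_split /=; apply: eq_bigr => a aS.
  by rewrite -(qcol a) (bigID (fun b => b \in S)).
have E3 : \sum_(a in S) \sum_(b | b \notin S) F b * q b a = 0.
  have E1' : \sum_(a in S) F a = \sum_(a in S) \sum_(b in S) F b * q b a.
    by rewrite E1 exchange_big.
  lra.
have : F i * q i j <= \sum_(a in S) \sum_(b | b \notin S) F b * q b a.
  rewrite (bigD1 j) //= (bigD1 i) //=.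
  rewrite -addrA lerDl; apply: addr_ge0.
    by apply: sumr_ge0 => b _; apply: mulr_ge0 => //; exact/ltW/Fp.
  apply: sumr_ge0 => a _; apply: sumr_ge0 => b _; apply: mulr_ge0 => //; exact/ltW/Fp.
by rewrite E3 leNgt mulr_gt0.
Qed.


Lemma map_fst_pairmap (T : Type) (x : T) (s : seq T) :
  map fst (pairmap pair x s) = belast x s.
Proof. by elim: s x => //= y s IH x; rewrite IH. Qed.

Lemma map_snd_pairmap (T : Type) (x : T) (s : seq T) :
  map snd (pairmap pair x s) = s.
Proof. by elim: s x => //= y s IH x; rewrite IH. Qed.

Lemma path_pairmap (T : eqType) (r : rel T) (x : T) (s : seq T) :
  path r x s -> forall e, e \in pairmap pair x s -> r e.1 e.2.
Proof.
elim: s x => //= y s IH x /andP [rxy ps] e; rewrite inE => /orP [/eqP -> //|].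
exact: IH.
Qed.

Lemma sum_lb (R : realType) (T : eqType) (r : seq T) (f : T -> R) c :
  (forall e, e \in r -> c <= f e) -> c * (size r)%:R <= \sum_(e <- r) f e.
Proof.
elim: r => [|x r IH] H; first by rewrite big_nil mulr0.
rewrite big_cons /= -addn1 natrD mulrDr mulr1 addrC; apply: lerD.
  by apply: H; rewrite inE eqxx.
by apply: IH => e er; apply: H; rewrite inE er orbT.
Qed.

Lemma cycle_exists (R : realType) n (F : 'I_n -> R) (q : 'I_n -> 'I_n -> R) i j :
  P3_feasible F q -> (forall a, 0 < F a) -> 0 < q i j ->
  exists r : seq ('I_n * 'I_n),
    [/\ (forall c, \sum_(e <- (i, j) :: r) (c == e.1)%:R = \sum_(e <- (i, j) :: r) (c == e.2)%:R :> R),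
        (forall e, e \in (i, j) :: r -> 0 < q e.1 e.2) & (size r < n)%N].
Proof.
move=> feas Fp qij.
have /connectP [p pp lp] := @reach R n F q i j feas Fp qij.
move: lp; case: (shortenP pp) => p' pp' up' _ lp'.
exists (pairmap pair j p'); split.
- move=> c.
  rewrite -(big_map fst xpredT (fun x => (c == x)%:R)) -(big_map snd xpredT (fun x => (c == x)%:R)) /=.
  rewrite map_fst_pairmap map_snd_pairmap; apply: perm_big.
  by rewrite [j :: p']lastI -lp' perm_sym perm_rcons perm_refl.
- move=> e; rewrite inE => /orP [/eqP -> //|]; exact: path_pairmap pp' e.
- rewrite size_pairmap.
  have := max_card (mem (j :: p')); rewrite card_ord (card_uniqP up') /=.
  done.
Qed.


Theorem mainTheorem11 (R : realType) (mk m : nat) (F : 'I_mk -> R)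
    (gamma eps1 eps2 : R) (W q : 'I_mk -> 'I_mk -> R) :
  (mk <= m)%N ->
  (forall i, 0 < F i) -> \sum_(i < mk) F i = 1 ->
  0 < gamma ->
  (forall i j, -1 <= W i j <= 1) ->
  0 <= eps1 -> 0 <= eps2 ->
  (forall i j, Num.max (W i j - eps1) (- eps2) <= W i i) ->
  P3_optimal gamma F W q ->
  forall i j, 0 < q i j ->
    W i i - m%:R * eps1 - Num.sqrt 2 * m%:R * gamma <= W i j.
Proof.
move=> hm Fp sF gp Wb e1p e2p Wmax [feas qopt] i j qij.
have [r [bal epos sz]] := @cycle_exists R mk F q i j feas Fp qij.
have H := @perturb R mk gamma F W q ((i, j) :: r) (ltW gp) Fp (conj feas qopt) bal epos.
rewrite big_cons /= in H.
have [qrow [_ qge0]] := feas.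
have q1 a b : q a b <= 1.
  rewrite -(qrow a) (bigD1 b) //= lerDl; exact: sumr_ge0.
have Wd a b : W a b - eps1 <= W a a by have := Wmax a b; rewrite ge_max => /andP [].
have lb : (- (eps1 + gamma)) * (size r)%:R <=
   \sum_(e <- r) ((W e.1 e.1 - gamma * q e.1 e.1) - (W e.1 e.2 - gamma * q e.1 e.2)).
  apply: sum_lb => e _.
  have := Wd e.1 e.2; have := q1 e.1 e.1; have := qge0 e.1 e.2; nra.
set s := (size r)%:R in lb.
have s0 : 0 <= s by rewrite /s ler0n.
have sm : s + 1 <= m%:R.
  by rewrite /s natr1 ler_nat; exact: leq_trans sz hm.
have sq : 1 <= Num.sqrt 2 :> R.
  rewrite -[X in X <= _]sqrtr1 ler_sqrt; lra.
have h1 : eps1 * s <= eps1 * m%:R by apply: ler_wpM2l => //; lra.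
have h2 : gamma * (s + 1) <= gamma * m%:R by apply: ler_wpM2l => //; exact: ltW.
have h3 : gamma * m%:R <= Num.sqrt 2 * m%:R * gamma.
  rewrite mulrC; apply: ler_wpM2r; [exact: ltW|].
  rewrite -[X in X <= _]mul1r; apply: ler_wpM2r => //; exact: ler0n.
have g1 : gamma * q i i <= gamma by rewrite -[X in _ <= X]mulr1; apply: ler_wpM2l => //; exact: ltW.
have g2 : 0 <= gamma * q i j by apply: mulr_ge0 => //; exact: ltW.
lra.
Qed.
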